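(* Let $q$ be a power of the prime $p$ and let $\mathcal{G}$ be a subgroup of $(\mathbb{F}_q,+)$ of order $p$. If there exists a $\mathcal{G}$-fixed c-Wieferich prime in $\mathbb{F}_q[T]$ of degree $p$, then every $\mathcal{G}$-fixed monic irreducible polynomial in $\mathbb{F}_q[T]$ of degree $p$ is a c-Wieferich prime in $\mathbb{F}_{q^r}[T]$ for at least one $r\in\{1,\ldots,p-1\}$.
   Context: For a prime power $Q$, the Carlitz module over $\mathbb{F}_Q[T]$: $\rho_N(X)$ for $N\in\mathbb{F}_Q[T]$ is the additive polynomial determined by requiring $N\mapsto\rho_N$ to be an $\mathbb{F}_Q$-algebra homomorphism into additive polynomials (multiplication = composition) with $\rho_T(X)=X^Q+TX$. A monic irreducible $\mathcal{P}\in\mathbb{F}_Q[T]$ is a c-Wieferich prime in $\mathbb{F}_Q[T]$ if $\rho_{\mathcal{P}-1}(1)\equiv0\pmod{\mathcal{P}^2}$. A polynomial $f$ is $\mathcal{G}$-fixed if $f(T+a)=f(T)$ for all $a\in\mathcal{G}$. *)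

(* Defs.v *)
From HB Require Import structures.
From mathcomp Require Import all_boot all_order all_algebra all_field.
Set Implicit Arguments. Unset Strict Implicit. Unset Printing Implicit Defensive.
Import GRing.Theory.
Local Open Scope ring_scope.

(* Carlitz module over F_Q[T], Q = #|L| (L a finite field, T = 'X).
   rho_T(b) = b^Q + T b, and for N = sum_i N_i T^i,
   rho_N(a) = sum_i N_i * (rho_T)^i (a)  (the evaluation at a of the
   additive polynomial rho_N determined by the F_Q-algebra homomorphism
   N |-> rho_N with multiplication = composition). *)
Definition carlitzT (L : finFieldType) (b : {poly L}) : {poly L} :=
  b ^+ #|L| + 'X * b.

Definition carlitz (L : finFieldType) (N a : {poly L}) : {poly L} :=
  \sum_(i < size N) (N`_i)%:P * iter (nat_of_ord i) (@carlitzT L) a.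

Definition cWieferich (L : finFieldType) (P : {poly L}) : Prop :=
  [/\ P \is monic, irreducible_poly P & P ^+ 2 %| carlitz (P - 1) 1].

Definition add_subgroup (F : finFieldType) (G : {set F}) : Prop :=
  0 \in G /\ (forall x y, x \in G -> y \in G -> x - y \in G).

Definition Gfixed (F : finFieldType) (G : {set F}) (f : {poly F}) : Prop :=
  forall a, a \in G -> f \Po ('X + a%:P) = f.

(* Main.v *)
Require Import Defs.
From HB Require Import structures.
From mathcomp Require Import all_boot all_order all_algebra all_field.
From mathcomp Require Import ring.
Import GRing.Theory.
Local Open Scope ring_scope.
Set Implicit Arguments. Unset Strict Implicit. Unset Printing Implicit Defensive.

Section UV.
Variable K : fieldType.
Variable g : K.

Fixpoint uu n : {poly K} :=
  if n is n'.+1 then uu n' \Po ('X + g%:P) + 'X * uu n' else 1.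
Fixpoint vv n : {poly K} :=
  if n is n'.+1 then uu n' + 'X * vv n' else 0.

Lemma uuS n : uu n.+1 = uu n \Po ('X + g%:P) + 'X * uu n. Proof. by []. Qed.
Lemma vvS n : vv n.+1 = uu n + 'X * vv n. Proof. by []. Qed.

Lemma comp_polyMn_ (q r : {poly K}) k : (q *+ k) \Po r = (q \Po r) *+ k.
Proof. by elim: k => [|k IH]; rewrite ?mulr0n ?comp_poly0 // !mulrS comp_polyD IH. Qed.

Lemma deriv_XaddC : ('X + g%:P)^`() = 1.
Proof. by rewrite derivD derivX derivC addr0. Qed.

Lemma deriv_uu n : (uu n.+1)^`() = uu n *+ n.+1.
Proof.
elim: n => [|n IH].
  by rewrite /= comp_polyC mulr1 derivD derivC derivX add0r.
rewrite [uu n.+2]uuS derivD deriv_comp deriv_XaddC mulr1 derivM derivX mul1r IH.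
rewrite comp_polyMn_ [uu n.+1]uuS.
move: (uu n \Po ('X + g%:P)) => A; move: (uu n) => B.
rewrite mulrnAr (mulrSr (A + 'X * B)) mulrnDl -!addrA; congr (_ + _).
by rewrite [LHS]addrA [LHS]addrC.
Qed.

Lemma deriv_vv n : (vv n.+1)^`() = vv n *+ n.+1.
Proof.
elim: n => [|n IH].
  by rewrite vvS mulr0 addr0 derivC.
rewrite [vv n.+2]vvS derivD derivM derivX mul1r IH deriv_uu [vv n.+1]vvS.
move: (uu n) => A; move: (vv n) => B.
rewrite mulrnAr (mulrSr (A + 'X * B)) mulrnDl -!addrA; congr (_ + _).
by rewrite [LHS]addrA [LHS]addrC.
Qed.

Lemma size_uu n : (size (uu n) <= n.+1)%N.
Proof.
elim: n => [|n IH]; first by rewrite size_poly1.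
rewrite uuS (leq_trans (size_add _ _)) // geq_max; apply/andP; split.
  rewrite (leq_trans (size_comp_poly_leq _ _)) // size_XaddC muln1.
  by rewrite ltnS (leq_trans _ IH) // leq_pred.
rewrite (leq_trans (size_mul_leq _ _)) // size_polyX.
by rewrite add2n ltnS.
Qed.

Lemma coef_uu n : (uu n)`_n = 1.
Proof.
elim: n => [|n IH]; first by rewrite coefC.
rewrite uuS coefD coefXM /= IH nth_default ?add0r //.
rewrite (leq_trans (size_comp_poly_leq _ _)) // size_XaddC muln1 ltnS.
by move: (size_uu n); case: (size (uu n)).
Qed.

Lemma size_vv n : (size (vv n) <= n)%N.
Proof.
elim: n => [|n IH]; first by rewrite size_poly0.
rewrite vvS (leq_trans (size_add _ _)) // geq_max size_uu /=.
rewrite (leq_trans (size_mul_leq _ _)) // size_polyX.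
by rewrite add2n /=.
Qed.

Section CharP.
Variable p : nat.
Hypothesis pK : p \in [pchar K].

Lemma pprime : prime p. Proof. exact: (pcharf_prime pK). Qed.

Lemma coef_mid (q : {poly K}) i : q^`() = 0 -> (0 < i < p)%N -> q`_i = 0.
Proof.
move=> dq /andP[i0 ip].
have := coef_deriv q i.-1; rewrite dq coef0 prednK // => /esym/eqP.
rewrite -mulr_natr mulf_eq0 => /orP[/eqP //|].
by rewrite -(dvdn_pcharf pK) gtnNdvd.
Qed.

Lemma uu_p : uu p = 'X^p + ((uu p)`_0)%:P.
Proof.
have p0 : (0 < p)%N by rewrite prime_gt0 ?pprime.
have du : (uu p)^`() = 0.
  by rewrite -[in LHS](prednK p0) deriv_uu prednK // (@mulrn_pchar {poly K} p) // pchar_poly.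
apply/polyP => i; rewrite coefD coefXn coefC.
have [->|i0] := eqVneq i 0%N; first by rewrite eq_sym eqn0Ngt p0 add0r.
rewrite ?(negPf i0) addr0.
have [ip|ip|ip] := ltngtP i p.
- by rewrite coef_mid ?du // lt0n i0 ip.
- by rewrite nth_default // (leq_trans (size_uu p)).
- by rewrite -?ip ?eqxx coef_uu.
Qed.

Lemma vv_p : vv p = ((vv p)`_0)%:P.
Proof.
have p0 : (0 < p)%N by rewrite prime_gt0 ?pprime.
have dv : (vv p)^`() = 0.
  by rewrite -[in LHS](prednK p0) deriv_vv prednK // (@mulrn_pchar {poly K} p) // pchar_poly.
apply/polyP => i; rewrite coefC.
have [->|i0] := eqVneq i 0%N; first by [].
have [ip|ip] := ltnP i p.
- by rewrite coef_mid ?dv // lt0n i0 ip.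
- by rewrite nth_default // (leq_trans (size_vv p)).
Qed.
End CharP.
End UV.

Lemma map_uu (K1 K2 : fieldType) (f : {rmorphism K1 -> K2}) (g : K1) n :
  map_poly f (uu g n) = uu (f g) n.
Proof.
elim: n => [|n IH]; first by rewrite rmorph1.
by rewrite !uuS rmorphD rmorphM /= map_polyX map_comp_poly IH rmorphD /= map_polyX map_polyC.
Qed.

Lemma map_vv (K1 K2 : fieldType) (f : {rmorphism K1 -> K2}) (g : K1) n :
  map_poly f (vv g n) = vv (f g) n.
Proof.
elim: n => [|n IH]; first by rewrite rmorph0.
by rewrite !vvS rmorphD rmorphM /= map_polyX IH map_uu.
Qed.

Section Frob.
Variables (K : fieldType) (p m : nat).
Hypothesis pK : p \in [pchar K].
Local Notation Q := (p ^ m)%N.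

Lemma pnatQ : [pchar K].-nat Q.
Proof.
rewrite (eq_pnat _ (pcharf_eq pK)) pnatX pnat_id //; exact: pcharf_prime pK.
Qed.

Lemma Q_neq0 : (Q == 0)%N = false.
Proof. by rewrite expn_eq0 eqn0Ngt prime_gt0 // (pcharf_prime pK). Qed.

Lemma frobD (x y : K) : (x + y) ^+ Q = x ^+ Q + y ^+ Q.
Proof. exact: exprDn_pchar pnatQ. Qed.

Lemma frob_nat n : (n%:R : K) ^+ Q = n%:R.
Proof.
elim: n => [|n IH]; first by rewrite expr0n Q_neq0.
by rewrite -natr1 frobD IH expr1n.
Qed.

Lemma horner_frob (q : {poly K}) z :
  (forall i, q`_i ^+ Q = q`_i) -> q.[z] ^+ Q = q.[z ^+ Q].
Proof.
elim/poly_ind: q => [|q c IH] H; first by rewrite !horner0 expr0n Q_neq0.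
rewrite !hornerMXaddC frobD exprMn IH.
  have := H 0%N; rewrite coefD coefMX coefC eqxx add0r => ->; done.
by move=> i; have := H i.+1; rewrite coefD coefMX coefC /= addr0.
Qed.

Variable g : K.
Hypothesis gQ : g ^+ Q = g.
Variable U : nat -> {poly K}.
Hypothesis U0 : U 0%N = 1.
Hypothesis US : forall i, U i.+1 = U i ^+ Q + 'X * U i.
Hypothesis Ufix : forall i j, (U i)`_j ^+ Q = (U i)`_j.

Lemma U_eval i z : z ^+ Q = z + g -> (U i).[z] = (uu g i).[z].
Proof.
elim: i z => [|i IH] z zQ; first by rewrite U0.
rewrite US uuS hornerD hornerM hornerX horner_exp horner_frob // zQ.
rewrite hornerD hornerM hornerX horner_comp hornerD hornerX hornerC.
rewrite IH //; last by rewrite frobD zQ gQ.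
by rewrite IH.
Qed.

Hypothesis Q0 : (Q%:R : K) = 0.

Lemma dU_eval i z : z ^+ Q = z + g -> (U i)^`().[z] = (vv g i).[z].
Proof.
elim: i z => [|i IH] z zQ; first by rewrite U0 derivC horner0.
rewrite US vvS derivD deriv_exp derivM derivX mul1r -mulr_natr -polyC_natr Q0 mulr0 add0r.
by rewrite !hornerE IH // U_eval.
Qed.

Lemma H_eval z : z ^+ Q = z + g ->
  let c := g ^+ p.-1 in let b := z ^+ p - c * z in
  let H := U p - c%:P * U 1%N - (b + 1)%:P in
  H.[z] = (uu g p)`_0 - c - 1 /\ H^`().[z] = (vv g p)`_0 - c.
Proof.
move=> zQ c b H; split.
  rewrite /H !hornerE !U_eval //.
  have -> : (uu g p).[z] = z ^+ p + (uu g p)`_0 by rewrite {1}(uu_p _ pK) !hornerE.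
  have -> : (uu g 1).[z] = 1 + z by rewrite uuS comp_polyC mulr1 !hornerE.
  move: ((uu g p)`_0) => u0; rewrite /b; ring.
rewrite /H !derivB derivC derivM derivC mul0r add0r subr0 !hornerE !dU_eval //.
have -> : (vv g p).[z] = (vv g p)`_0 by rewrite {1}(vv_p _ pK) hornerC.
have -> : (vv g 1).[z] = 1 by rewrite vvS mulr0 addr0 hornerC.
by rewrite mulr1.
Qed.

End Frob.

Definition UK (K : fieldType) (Q : nat) i :=
  iter i (fun b : {poly K} => b ^+ Q + 'X * b) 1.

Lemma map_carlT (L : finFieldType) (K : fieldType) (e : {rmorphism L -> K}) i :
  map_poly e (iter i (@carlitzT L) 1) = UK K #|L| i.
Proof.
elim: i => [|i IH] /=; first by rewrite rmorph1.
by rewrite /carlitzT rmorphD rmorphM rmorphXn /= map_polyX IH.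
Qed.

Lemma map_carlitz (L : finFieldType) (K : fieldType) (e : {rmorphism L -> K}) N :
  map_poly e (carlitz N 1) =
  \sum_(i < size (map_poly e N)) ((map_poly e N)`_i)%:P * UK K #|L| i.
Proof.
rewrite /carlitz rmorph_sum size_map_poly; apply: eq_bigr => i _.
by rewrite rmorphM /= map_polyC map_carlT coef_map.
Qed.

Lemma sum_delta (R : nzRingType) n k (F : nat -> R) : (k < n)%N ->
  \sum_(i < n) ((i == k :> nat)%:R * F i) = F k.
Proof.
move=> kn; rewrite (bigD1 (Ordinal kn)) //= eqxx mul1r big1 ?addr0 //.
by move=> i /negPf; rewrite -val_eqE /= => ->; rewrite mul0r.
Qed.

Lemma Lambda_eval (K : fieldType) (U : nat -> {poly K}) p (c d : K) :
  (2 <= p)%N ->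
  let N := 'X^p - c%:P * 'X - d%:P in
  \sum_(i < size N) (N`_i)%:P * U i = U p - c%:P * U 1%N - d%:P * U 0%N.
Proof.
move=> p2 N.
have s1 : (size (c%:P * 'X)%R <= 2)%N.
  by rewrite (leq_trans (size_mul_leq _ _)) // size_polyX size_polyC addn2 ltnS leq_b1.
have s2 : (size (d%:P) <= 2)%N by rewrite size_polyC (leq_trans (leq_b1 _)).
have s3 : (size (- (c%:P * 'X) - d%:P)%R <= 2)%N.
  by rewrite (leq_trans (size_add _ _)) // geq_max size_opp s1 size_opp s2.
have sN : size N = p.+1.
  rewrite /N -addrA size_addl size_polyXn //.
  by rewrite (leq_ltn_trans s3) // ltnS.
rewrite sN.
have -> : \sum_(i < p.+1) (N`_i)%:P * U i =
   \sum_(i < p.+1) ((i == p :> nat)%:R * U i) - c%:P * \sum_(i < p.+1) ((i == 1%N :> nat)%:R * U i)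
   - d%:P * \sum_(i < p.+1) ((i == 0%N :> nat)%:R * U i).
  rewrite !mulr_sumr -!sumrB; apply: eq_bigr => i _.
  rewrite /N !coefB coefXn coefCM coefX coefC !polyCB polyCM !rmorph_nat.
  by case: (i == 0 :> nat); rewrite !mulrBl !mulrA ?mulr1n ?mulr0n ?mulr1 ?mulr0 ?mul0r ?mul1r.
by rewrite !sum_delta // ltnS // (leq_trans _ p2).
Qed.

Lemma root_dvd (L K : fieldType) (e : {rmorphism L -> K}) (P q : {poly L}) z :
  irreducible_poly P -> root (map_poly e P) z -> root (map_poly e q) z -> P %| q.
Proof.
move=> irrP rP rq.
have gP : gcdp P q %| P by exact: dvdp_gcdl.
have rg : root (map_poly e (gcdp P q)) z by rewrite gcdp_map root_gcd rP rq.
have [s1|s1] := eqVneq (size (gcdp P q)) 1%N.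
  move: rg; have /size_poly1P[a a0 ->] : size (gcdp P q) == 1%N by apply/eqP.
  by rewrite map_polyC rootC fmorph_eq0 (negPf a0).
have := irrP _ s1 gP => /eqp_dvdl <-; exact: dvdp_gcdr.
Qed.

Lemma crit (L : finFieldType) (K : fieldType) (e : {rmorphism L -> K}) (p m : nat)
  (pK : p \in [pchar K]) (cardL : #|L| = (p ^ m)%N) (m0 : (0 < m)%N)
  (P : {poly L}) (g z : K) :
  map_poly e P = 'X^p - (g ^+ p.-1)%:P * 'X - (z ^+ p - g ^+ p.-1 * z)%:P ->
  z ^+ #|L| = z + g -> g ^+ #|L| = g -> g != 0 ->
  (P ^+ 2 %| carlitz (P - 1) 1 ->
     (uu g p)`_0 = 1 + g ^+ p.-1 /\ (vv g p)`_0 = g ^+ p.-1) /\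
  (irreducible_poly P -> (uu g p)`_0 = 1 + g ^+ p.-1 ->
     (vv g p)`_0 = g ^+ p.-1 -> P ^+ 2 %| carlitz (P - 1) 1).
Proof.
move=> mP zQ gQ g0.
have p2 : (2 <= p)%N by exact: prime_gt1 (pcharf_prime pK).
set c := g ^+ p.-1; set b := z ^+ p - c * z.
have c0 : c != 0 by rewrite expf_neq0.
have mN : map_poly e (P - 1) = 'X^p - c%:P * 'X - (b + 1)%:P.
  by rewrite rmorphB rmorph1 /= mP -/c -/b [(b + 1)%:P]polyCD polyC1 opprD addrA.
have HE : map_poly e (carlitz (P - 1) 1) =
    UK K (p ^ m) p - c%:P * UK K (p ^ m) 1 - (b + 1)%:P.
  by rewrite map_carlitz mN Lambda_eval // cardL (_ : UK K (p ^ m) 0 = 1) // mulr1.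
rewrite cardL in zQ gQ.
have U0 : UK K (p ^ m) 0 = 1 by [].
have US : forall i, UK K (p ^ m) i.+1 = UK K (p ^ m) i ^+ (p ^ m) + 'X * UK K (p ^ m) i by [].
have Ufix : forall i j, (UK K (p ^ m) i)`_j ^+ (p ^ m) = (UK K (p ^ m) i)`_j.
  move=> i j; rewrite -cardL -(map_carlT e) coef_map -rmorphXn /=.
  by rewrite expf_card.
have Q0 : ((p ^ m)%:R : K) = 0 by rewrite natrX (pcharf0 pK) expr0n eqn0Ngt m0.
have [Hz dHz] := H_eval pK gQ U0 US Ufix Q0 zQ.
rewrite -/c -/b -HE in Hz dHz.
have mPz : (map_poly e P).[z] = 0 by rewrite mP !hornerE /b; ring.
split.
  rewrite -(dvdp_map e) rmorphXn /= => /dvdpP[k Hk].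
  rewrite Hk hornerM horner_exp mPz expr0n /= mulr0 in Hz.
  rewrite Hk derivM deriv_exp !hornerE mPz /= expr1 !(mulr0, mul0r, addr0) in dHz.
  split.
    move: Hz; move: ((uu g p)`_0) => u0 Hz.
    by rewrite -[u0]subr0 Hz; ring.
  move: dHz; move: ((vv g p)`_0) => v0 dHz.
  by rewrite -[v0]subr0 dHz; ring.
move=> irrP hu hv.
have Hz0 : (map_poly e (carlitz (P - 1) 1)).[z] = 0 by rewrite Hz hu; ring.
have dHz0 : (map_poly e (carlitz (P - 1) 1))^`().[z] = 0 by rewrite dHz hv subrr.
have /dvdpP[k Hk] : P %| carlitz (P - 1) 1.
  by apply: (@root_dvd _ _ e _ _ z irrP); apply/eqP.
have dmP : (map_poly e P)^`() = - c%:P.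
  rewrite mP !derivB derivXn derivM !derivC derivX mul0r add0r mulr1 subr0.
  by rewrite -mulr_natr -polyC_natr (pcharf0 pK) mulr0 sub0r.
have kz : (map_poly e k).[z] = 0.
  move: dHz0; rewrite Hk rmorphM /= derivM dmP !hornerE mPz mulr0 add0r.
  by move/eqP; rewrite mulrN oppr_eq0 mulf_eq0 (negPf c0) orbF => /eqP.
have /dvdpP[k2 Hk2] : P %| k.
  by apply: (@root_dvd _ _ e _ _ z irrP); apply/eqP.
by apply/dvdpP; exists k2; rewrite Hk Hk2 expr2 mulrA.
Qed.

Lemma natr_inj (K : fieldType) p (pK : p \in [pchar K]) i j :
  (i < p)%N -> (j < p)%N -> (i%:R : K) = j%:R -> i = j.
Proof.
wlog le : i j / (i <= j)%N.
  move=> H ip jp eq; case/orP: (leq_total i j) => [/H|/H]; first exact.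
  by move=> H2; symmetry; apply: H2.
move=> ip jp eq.
have : (p %| j - i)%N by rewrite (dvdn_pcharf pK) natrB // eq subrr.
rewrite /dvdn modn_small; last by rewrite (leq_ltn_trans (leq_subr _ _)).
by rewrite subn_eq0 => ji; apply/eqP; rewrite eqn_leq le ji.
Qed.

Lemma monic_eq_prod (K : fieldType) (A q B : {poly K}) n :
  A \is monic -> B \is monic -> size A = n.+1 -> size B = n.+1 -> A = q * B -> A = B.
Proof.
move=> mA mB sA sB eA; subst A.
have q0 : q != 0.
  by apply/eqP => q0; move: mA; rewrite q0 mul0r monicE lead_coef0 eq_sym oner_eq0.
have B0 : B != 0 by apply: monic_neq0.
have : size (q * B) = (size q + size B).-1 by rewrite size_mul.
rewrite sA sB addnS /= => /eqP; rewrite -{1}[n.+1]add1n eqn_add2r => /eqP sq.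
have /size_poly1P[a a0 qa] : size q == 1%N by rewrite -sq.
move: mA; rewrite qa mul_polyC monicE lead_coefZ (monicP mB) mulr1 => /eqP ->.
by rewrite scale1r.
Qed.

Section Orbit.
Variables (L K : fieldType) (e : {rmorphism L -> K}) (p : nat).
Hypothesis pK : p \in [pchar K].
Variables (P : {poly L}) (z g : K).
Hypotheses (mP : P \is monic) (sP : size P = p.+1) (g0 : g != 0).
Hypothesis rz : root (map_poly e P) z.
Hypothesis rg : forall y, root (map_poly e P) y -> root (map_poly e P) (y + g).

Let rs := [seq z + j%:R * g | j <- iota 0 p].

Lemma rs_uniq : uniq rs.
Proof.
rewrite map_inj_in_uniq ?iota_uniq // => i j; rewrite !mem_iota !add0n => ip jp.
by move/addrI/mulIf => /(_ g0) /(natr_inj pK ip jp).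
Qed.

Lemma rs_roots : all (root (map_poly e P)) rs.
Proof.
apply/allP => y /mapP[j _ ->]; elim: j => [|j IH]; first by rewrite mul0r addr0.
by rewrite -natr1 mulrDl mul1r addrA rg.
Qed.

Let c := g ^+ p.-1.
Let T := 'X^p - c%:P * 'X - (z ^+ p - c * z)%:P.

Lemma p_prime : prime p. Proof. exact: pcharf_prime pK. Qed.

Lemma T_roots : all (root T) rs.
Proof.
have p2 : (1 < p)%N by exact: prime_gt1 p_prime.
apply/allP => y /mapP[j _ ->]; rewrite /root /T !hornerE.
have fD : (z + j%:R * g) ^+ p = z ^+ p + j%:R * g ^+ p.
  have pn : [pchar K].-nat p by rewrite (eq_pnat _ (pcharf_eq pK)) pnat_id // p_prime.
  rewrite (exprDn_pchar _ _ pn) exprMn.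
  by have := @frob_nat K p 1 pK j; rewrite expn1 => ->.
rewrite fD /c; have -> : g ^+ p = g ^+ p.-1 * g by rewrite -exprSr prednK // ltnW.
by apply/eqP; ring.
Qed.

Lemma sizeT : size T = p.+1.
Proof.
have p2 : (1 < p)%N by exact: prime_gt1 p_prime.
have s1 : (size (c%:P * 'X)%R <= 2)%N.
  by rewrite (leq_trans (size_mul_leq _ _)) // size_polyX size_polyC addn2 ltnS leq_b1.
have s2 : (size ((z ^+ p - c * z)%:P) <= 2)%N by rewrite size_polyC (leq_trans (leq_b1 _)).
have s3 : (size (- (c%:P * 'X) - (z ^+ p - c * z)%:P)%R <= 2)%N.
  by rewrite (leq_trans (size_add _ _)) // geq_max size_opp s1 size_opp s2.
rewrite /T -addrA size_addl size_polyXn //.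
by rewrite (leq_ltn_trans s3) // ltnS.
Qed.

Lemma monicT : T \is monic.
Proof.
have p2 : (1 < p)%N by exact: prime_gt1 p_prime.
have s1 : (size (c%:P * 'X)%R <= 2)%N.
  by rewrite (leq_trans (size_mul_leq _ _)) // size_polyX size_polyC addn2 ltnS leq_b1.
have s2 : (size ((z ^+ p - c * z)%:P) <= 2)%N by rewrite size_polyC (leq_trans (leq_b1 _)).
have s3 : (size (- (c%:P * 'X) - (z ^+ p - c * z)%:P)%R <= 2)%N.
  by rewrite (leq_trans (size_add _ _)) // geq_max size_opp s1 size_opp s2.
rewrite monicE /T -addrA lead_coefDl ?lead_coefXn // size_polyXn.
by rewrite (leq_ltn_trans s3) // ltnS.
Qed.

Lemma orbit_shape : map_poly e P = T /\
  (forall y, root (map_poly e P) y -> exists2 j, (j < p)%N & y = z + j%:R * g).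
Proof.
have ur : uniq_roots rs by rewrite uniq_rootsE rs_uniq.
have [q1 e1] := uniq_roots_prod_XsubC rs_roots ur.
have [q2 e2] := uniq_roots_prod_XsubC T_roots ur.
have sPi : size (\prod_(x <- rs) ('X - x%:P)) = p.+1.
  by rewrite size_prod_XsubC size_map size_iota.
have mPi := monic_prod_XsubC rs predT id.
have mmP : map_poly e P \is monic by rewrite map_monic.
have smP : size (map_poly e P) = p.+1 by rewrite size_map_poly.
have E1 := monic_eq_prod mmP mPi smP sPi e1.
have E2 := monic_eq_prod monicT mPi sizeT sPi e2.
split; first by rewrite E1 E2.
move=> y; rewrite E1 root_prod_XsubC => /mapP[j]; rewrite mem_iota add0n => /andP[_ jp] ->.
by exists j.
Qed.

End Orbit.

Section FinL.
Variables (L : finFieldType) (K : closedFieldType) (e : {rmorphism L -> K}) (p m : nat).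
Hypothesis pK : p \in [pchar K].
Hypothesis cardL : #|L| = (p ^ m)%N.

Lemma horner_map_frob (d : {poly L}) y :
  (map_poly e d).[y ^+ #|L|] = (map_poly e d).[y] ^+ #|L|.
Proof.
rewrite cardL (horner_frob pK) // => i.
by rewrite coef_map -rmorphXn /= -cardL expf_card.
Qed.

Lemma root_frob (d : {poly L}) y :
  root (map_poly e d) y -> root (map_poly e d) (y ^+ #|L|).
Proof.
rewrite /root horner_map_frob => /eqP ->.
by rewrite expr0n cardL (@Q_neq0 K p m pK).
Qed.

Lemma irr_frob (P : {poly L}) (g : K) :
  g != 0 -> size P = p.+1 ->
  (forall y, root (map_poly e P) y -> y ^+ #|L| = y + g) -> irreducible_poly P.
Proof.
move=> g0 sP hP; split; first by rewrite sP ltnS prime_gt0 // (pcharf_prime pK).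
have P0 : P != 0 by rewrite -size_poly_gt0 sP.
move=> d sd dP.
have d0 : d != 0 by apply/eqP => d0; move: dP; rewrite d0 dvd0p => /eqP P00; rewrite P00 eqxx in P0.
have [y0 ry0] : exists y, root (map_poly e d) y.
  by apply/closed_rootP; rewrite size_map_poly.
have dPr : forall y, root (map_poly e d) y -> root (map_poly e P) y.
  move=> y; have /dvdpP[k ->] := dP; rewrite rmorphM /= /root hornerM => /eqP ->.
  by rewrite mulr0.
have H : forall j, root (map_poly e d) (y0 + j%:R * g).
  elim => [|j IH]; first by rewrite mul0r addr0.
  have := root_frob IH; rewrite (hP _ (dPr _ IH)).
  by rewrite -natr1 mulrDl mul1r addrA.
set rs := [seq y0 + j%:R * g | j <- iota 0 p].
have urs : uniq rs.
  rewrite map_inj_in_uniq ?iota_uniq // => i j; rewrite !mem_iota !add0n => ip jp.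
  by move/addrI/mulIf => /(_ g0) /(natr_inj pK ip jp).
have ars : all (root (map_poly e d)) rs by apply/allP => y /mapP[j _ ->].
have := max_poly_roots _ ars urs; rewrite size_map size_iota size_map_poly.
rewrite map_poly_eq0 d0 => /(_ isT) pd.
have dle : (size d <= p.+1)%N by rewrite -sP dvdp_leq.
by rewrite -dvdp_size_eqp // sP eqn_leq dle pd.
Qed.
End FinL.

Lemma root_map_dvd (L K : fieldType) (e : {rmorphism L -> K}) (d q : {poly L}) y :
  d %| q -> root (map_poly e d) y -> root (map_poly e q) y.
Proof.
move=> /dvdpP[k ->]; rewrite rmorphM /= /root hornerM => /eqP ->.
by rewrite mulr0.
Qed.

Lemma map_XqX (L K : fieldType) (e : {rmorphism L -> K}) q (a : L) :
  map_poly e ('X^q - 'X - a%:P) = 'X^q - 'X - (e a)%:P.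
Proof. by rewrite !rmorphB /= map_polyXn map_polyX map_polyC. Qed.

Section Grp.
Variables (F : finFieldType) (G : {set F}).
Hypothesis HG : add_subgroup G.

Lemma G_mulrn a n : a \in G -> a *+ n \in G.
Proof.
case: HG => G0 GB aG; elim: n => [|n IH]; first by rewrite mulr0n.
have := GB _ _ IH (GB _ _ G0 aG); by rewrite sub0r opprK -mulrSr.
Qed.

Lemma G_nz p : #|G| = p -> (1 < p)%N -> exists2 a, a \in G & a != 0.
Proof.
move=> cG p1; case: (pickP (fun x => (x \in G) && (x != 0))) => [a /andP[]|H].
  by exists a.
have : G \subset [set 0].
  by apply/subsetP => x xG; rewrite inE; have := H x; rewrite xG /= => /negbFE.
by move/subset_leq_card; rewrite cards1 cG leqNgt p1.
Qed.

Lemma G_gen p (pF : p \in [pchar F]) a : #|G| = p -> a \in G -> a != 0 ->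
  forall b, b \in G -> exists2 j, (j < p)%N & b = a *+ j.
Proof.
move=> cG aG a0 b bG.
set S := [set a *+ (val j) | j : 'I_p].
have SG : S \subset G by apply/subsetP => x /imsetP[j _ ->]; exact: G_mulrn.
have cS : #|S| = p.
  have inj : injective (fun j : 'I_p => a *+ val j).
    move=> i j /=; rewrite -[a *+ i]mulr_natl -[a *+ j]mulr_natl.
    move=> /(mulIf a0) /(natr_inj pF (ltn_ord i) (ltn_ord j)) h.
    exact: val_inj.
  by rewrite card_imset // card_ord.
have SeG : S = G by apply/eqP; rewrite eqEcard SG cS cG leqnn.
by move: bG; rewrite -SeG => /imsetP[j _ ->]; exists (val j); rewrite ?ltn_ord.
Qed.
End Grp.

Lemma Gfixed_root (F : finFieldType) (G : {set F}) (K : fieldType)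
  (e : {rmorphism F -> K}) (R : {poly F}) a y :
  Gfixed G R -> a \in G -> root (map_poly e R) y -> root (map_poly e R) (y + e a).
Proof.
move=> GR aG; rewrite /root.
have -> : (map_poly e R).[y + e a] = (map_poly e (R \Po ('X + a%:P))).[y].
  by rewrite map_comp_poly horner_comp rmorphD /= map_polyX map_polyC !hornerE.
by rewrite GR.
Qed.

Lemma exists_g1 (p k : nat) (F : finFieldType) (G : {set F}) (K : closedFieldType)
  (e : {rmorphism F -> K}) (R : {poly F}) :
  prime p -> #|F| = (p ^ k)%N -> add_subgroup G -> #|G| = p ->
  R \is monic -> irreducible_poly R -> Gfixed G R -> size R = p.+1 ->
  exists2 a1, a1 \in G & a1 != 0 /\ R %| 'X^#|F| - 'X - a1%:P.
Proof.
move=> pr cardF HG cG mR irrR GR sR.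
have pF := card_finPcharP cardF pr.
have pK := rmorph_pchar e pF.
have p1 : (1 < p)%N by exact: prime_gt1.
have [a0 a0G a00] := G_nz cG p1.
have [z rz] : exists z, root (map_poly e R) z.
  by apply/closed_rootP; rewrite size_map_poly sR eqSS -lt0n prime_gt0.
have ea00 : e a0 != 0 by rewrite fmorph_eq0.
have clos : forall y, root (map_poly e R) y -> root (map_poly e R) (y + e a0).
  by move=> y; apply: (@Gfixed_root F G K e R a0 y GR a0G).
have [_ hroots] := orbit_shape pK mR sR ea00 rz clos.
have rzq : root (map_poly e R) (z ^+ #|F|) := root_frob pK cardF rz.
have [j jp hj] := hroots _ rzq.
have ea1 : e (a0 *+ j) = j%:R * e a0 by rewrite rmorphMn mulr_natl.
exists (a0 *+ j); first exact: G_mulrn.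
split.
  apply/eqP => a1z.
  have zq : z ^+ #|F| = z by rewrite hj -ea1 a1z rmorph0 addr0.
  have : (map_poly e ('X^#|F| - 'X)).[z] = 0.
    by rewrite rmorphB /= map_polyXn map_polyX !hornerE zq subrr.
  rewrite finField_genPoly rmorph_prod horner_prod => /eqP/prodf_eq0[x _ /eqP].
  rewrite rmorphB /= map_polyX map_polyC !hornerE => /eqP; rewrite subr_eq0 => /eqP zx.
  have Rx : root R x.
    by move: rz; rewrite /root zx horner_map fmorph_eq0.
  have dx : ('X - x%:P) %| R by rewrite dvdp_XsubCl.
  have := irrR ('X - x%:P); rewrite size_XsubC => /(_ isT dx) /eqp_size.
  by rewrite size_XsubC sR => -[] p1'; rewrite -p1' in p1.
apply: (@root_dvd _ _ e _ _ z irrR rz).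
by rewrite map_XqX /root !hornerE hj ea1; apply/eqP; ring.
Qed.

Lemma sub2_eq0 (R : comNzRingType) (x y g : R) : x - y - g = 0 -> x = y + g.
Proof. by move=> h; rewrite -[x]subr0 -h; ring. Qed.

Unset Implicit Arguments.
Set Strict Implicit.
Theorem corollary5p4 (p k : nat) (F : finFieldType) (G : {set F}) :
  prime p -> #|F| = (p ^ k)%N ->
  add_subgroup G -> #|G| = p ->
  (exists W : {poly F}, [/\ Gfixed G W, size W = p.+1 & cWieferich W]) ->
  forall P : {poly F},
    P \is monic -> irreducible_poly P -> Gfixed G P -> size P = p.+1 ->
    exists r : nat, [/\ (0 < r)%N, (r < p)%N &
      forall (L : finFieldType) (f : {rmorphism F -> L}),
        #|L| = (#|F| ^ r)%N -> cWieferich (map_poly f P)].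
Proof.
move=> pr cardF HG cG [W [GW sW wW]] P mP irrP GP sP.
have pF := card_finPcharP cardF pr.
have p1 : (1 < p)%N := prime_gt1 pr.
have k0 : (0 < k)%N.
  by move: (finNzRing_gt1 F); rewrite cardF; case: (k) => //; rewrite expn0.
case: (countable_algebraic_closure F) => KF [eF _].
have [wm wirr wdvd] := wW.
have [aW aWG [aW0 dW]] := exists_g1 eF pr cardF HG cG wm wirr GW sW.
have [aP aPG [aP0 dP]] := exists_g1 eF pr cardF HG cG mP irrP GP sP.
have pKF := rmorph_pchar eF pF.
have [zW rzW] : exists z, root (map_poly eF W) z.
  by apply/closed_rootP; rewrite size_map_poly sW eqSS -lt0n prime_gt0.
set gW := eF aW.
have hW : forall y, root (map_poly eF W) y -> y ^+ #|F| = y + gW.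
  move=> y ry; have := root_map_dvd dW ry; rewrite map_XqX /root !hornerE.
  by move/eqP/sub2_eq0.
have gWq : gW ^+ #|F| = gW by rewrite -rmorphXn expf_card.
have gW0 : gW != 0 by rewrite fmorph_eq0.
have closW : forall y, root (map_poly eF W) y -> root (map_poly eF W) (y + gW).
  by move=> y ry; rewrite -hW // (root_frob pKF cardF ry).
have [shW _] := orbit_shape pKF wm sW gW0 rzW closW.
have [critW _] := @crit F KF eF p k pKF cardF k0 W gW zW shW (hW _ rzW) gWq gW0.
have [uW vW] := critW wdvd.
have UW : (uu aW p)`_0 = 1 + aW ^+ p.-1.
  apply: (fmorph_inj eF); rewrite -coef_map map_uu uW.
  by rewrite rmorphD rmorph1 rmorphXn.
have VW : (vv aW p)`_0 = aW ^+ p.-1.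
  apply: (fmorph_inj eF); rewrite -coef_map map_vv vW.
  by rewrite rmorphXn.
have [r rp aWr] := G_gen HG pF cG aPG aP0 aWG.
have r0 : (0 < r)%N.
  by move: aWr; case: (r) => // aWr'; rewrite aWr' mulr0n eqxx in aW0.
exists r; split => //.
move=> L f cardL.
have pL := rmorph_pchar f pF.
case: (countable_algebraic_closure L) => KL [e _].
have pK := rmorph_pchar e pL.
have cardL' : #|L| = (p ^ (k * r))%N by rewrite cardL cardF expnM.
have kr0 : (0 < k * r)%N by rewrite muln_gt0 k0 r0.
set Pt := map_poly f P.
have mPt : Pt \is monic by rewrite map_monic.
have sPt : size Pt = p.+1 by rewrite size_map_poly.
have [z rz] : exists z, root (map_poly e Pt) z.
  by apply/closed_rootP; rewrite size_map_poly sPt eqSS -lt0n prime_gt0.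
set h := e (f aP).
have hq : forall y, root (map_poly e Pt) y -> y ^+ #|F| = y + h.
  move=> y ry.
  have dPt : Pt %| map_poly f ('X^#|F| - 'X - aP%:P) by rewrite dvdp_map.
  have := root_map_dvd dPt ry; rewrite !map_XqX /root !hornerE.
  by move/eqP/sub2_eq0.
have hF : h ^+ #|F| = h by rewrite -!rmorphXn expf_card.
have pKk := pK.
have it : forall y, root (map_poly e Pt) y -> forall j, y ^+ (#|F| ^ j) = y + j%:R * h.
  move=> y ry; elim => [|j IH]; first by rewrite expn0 expr1 mul0r addr0.
  rewrite expnSr exprM IH.
  move: (hq _ ry) hF; rewrite cardF => hqy hF'.
  rewrite (@frobD KL p k pK) hqy exprMn (@frob_nat KL p k pK) hF'.
  by rewrite -natr1 mulrDl mul1r; ring.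
set g := e (f aW).
have gE : g = r%:R * h by rewrite /g aWr !rmorphMn mulr_natl.
have hL : forall y, root (map_poly e Pt) y -> y ^+ #|L| = y + g.
  by move=> y ry; rewrite cardL it // gE.
have gq : g ^+ #|L| = g by rewrite /g -rmorphXn expf_card.
have g0 : g != 0 by rewrite !fmorph_eq0.
have irrPt : irreducible_poly Pt := irr_frob pK cardL' g0 sPt hL.
have clos : forall y, root (map_poly e Pt) y -> root (map_poly e Pt) (y + g).
  by move=> y ry; rewrite -hL // (root_frob pK cardL' ry).
have [sh _] := orbit_shape pK mPt sPt g0 rz clos.
have [_ critP] := @crit L KL e p (k * r) pK cardL' kr0 Pt g z sh (hL _ rz) gq g0.
split => //; apply: critP => //.
  have Ef : forall x : F, e (f (1 + x ^+ p.-1)) = 1 + e (f x) ^+ p.-1.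
    by move=> x; rewrite !rmorphD !rmorph1 !rmorphXn.
  by rewrite /g -map_uu -map_uu !coef_map UW; exact: Ef.
have Ef : forall x : F, e (f (x ^+ p.-1)) = e (f x) ^+ p.-1.
  by move=> x; rewrite !rmorphXn.
by rewrite /g -map_vv -map_vv !coef_map VW; exact: Ef.
Qed.
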